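(* Let $a\in\mathbb{Z}$, $b\in\mathbb{Z}_{>0}$, $x(1)\in\mathbb{R}$, and $p(1)=a/b$. Define $(p(i),x(i))_{i\ge1}$ by $$p(i+1)=p(i)-\operatorname{sgn}x(i),\qquad x(i+1)=x(i)+p(i)-\operatorname{sgn}x(i).$$ Then the sequence $(x(i))_{i\ge 1}$ is bounded if and only if there exists $k\ge 1$ with $(p(k+1),x(k+1))=(p(1),x(1))$ (in which case the whole sequence $(p(i),x(i))$ is periodic with period $k$).
   Context: Here $\operatorname{sgn}(x)=x/|x|$ for $x\neq 0$ and $\operatorname{sgn}(0)=0$. *)

(* Defs.v *)
From Stdlib Require Import Reals ZArith.
Open Scope R_scope.

Definition sgn (x : R) : R :=
  if Req_EM_T x 0 then 0 else x / Rabs x.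

Definition step (s : R * R) : R * R :=
  let (p, x) := s in (p - sgn x, x + p - sgn x).

(* orb p1 x1 n = (p(n+1), x(n+1)), i.e. the state after n steps
   starting from (p(1), x(1)) = (p1, x1). *)
Fixpoint orb (p1 x1 : R) (n : nat) : R * R :=
  match n with
  | O => (p1, x1)
  | S n' => step (orb p1 x1 n')
  end.

Definition pseq (p1 x1 : R) (i : nat) : R := fst (orb p1 x1 (i - 1)).
Definition xseq (p1 x1 : R) (i : nat) : R := snd (orb p1 x1 (i - 1)).

(* Main.v *)
Require Import Defs.
From Stdlib Require Import Reals ZArith.
From Stdlib Require Import List Lia Lra Classical.
Open Scope R_scope.

Lemma step_inj s t : step s = step t -> s = t.
Proof.
  destruct s as [p x], t as [q y]; simpl; intro H; injection H; intros H1 H2.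
  assert (x = y) by lra. subst y. f_equal. lra.
Qed.

Lemma orb_shift p1 x1 : forall i d, orb p1 x1 (i + d) = orb p1 x1 i -> orb p1 x1 d = orb p1 x1 0.
Proof.
  induction i; intros d H; simpl in *; [exact H|].
  apply IHi. apply step_inj. exact H.
Qed.

Definition sgnZ (x : R) : Z :=
  match total_order_T x 0 with
  | inleft (left _) => (-1)%Z
  | inleft (right _) => 0%Z
  | inright _ => 1%Z
  end.

Lemma sgn_sgnZ x : sgn x = IZR (sgnZ x).
Proof.
  unfold sgn, sgnZ. destruct (Req_EM_T x 0) as [e|n];
  destruct (total_order_T x 0) as [[h|h]|h]; try lra; try reflexivity.
  - rewrite Rabs_left by lra. field. lra.
  - rewrite Rabs_right by lra. field. lra.
Qed.

Section AB.
Variables (a b : Z) (x1 : R).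
Let p1 := IZR a / IZR b.
Fixpoint AB (n : nat) : Z * Z :=
  match n with
  | O => (a, 0%Z)
  | S n => let z := sgnZ (snd (orb p1 x1 n)) in
           ((fst (AB n) - z * b)%Z, (snd (AB n) + fst (AB n) - z * b)%Z)
  end.

Lemma AB_rep (hb : (0 < b)%Z) n :
  orb p1 x1 n = (IZR (fst (AB n)) / IZR b, x1 + IZR (snd (AB n)) / IZR b).
Proof.
  assert (Hb : IZR b <> 0) by (apply not_0_IZR; lia).
  induction n; simpl.
  - f_equal. field. exact Hb.
  - fold p1. rewrite IHn. simpl. rewrite sgn_sgnZ. simpl.
    rewrite !minus_IZR, !plus_IZR, !mult_IZR. f_equal; field; exact Hb.
Qed.
End AB.

Lemma pigeon (f : nat -> Z * Z) (R0 : Z) :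
  (forall n, (Z.abs (fst (f n)) <= R0 /\ Z.abs (snd (f n)) <= R0)%Z) ->
  exists i j, (i < j)%nat /\ f i = f j.
Proof.
  intro Hf. apply NNPP. intro Hn.
  set (K := Z.to_nat (2 * R0 + 1)).
  set (rng := map (fun k => Z.of_nat k - R0)%Z (seq 0 K)).
  set (L := list_prod rng rng).
  set (l := map f (seq 0 (K * K + 1))).
  assert (ND : NoDup l).
  { apply NoDup_map_NoDup_ForallPairs; [|apply seq_NoDup].
    intros i j _ _ E. destruct (Nat.lt_trichotomy i j) as [h|[h|h]]; auto.
    - exfalso; apply Hn; eauto.
    - exfalso; apply Hn; exists j, i; split; auto. }
  assert (INC : incl l L).
  { intros z Hz. unfold l in Hz. apply in_map_iff in Hz. destruct Hz as [n [<- _]].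
    destruct (Hf n) as [H1 H2]. destruct (f n) as [u v]. cbn [fst snd] in *.
    unfold L. apply in_prod_iff. unfold rng. split; apply in_map_iff.
    - exists (Z.to_nat (u + R0)). split; [revert H1; clear; lia|]. apply in_seq. unfold K. revert H1 H2; clear. lia.
    - exists (Z.to_nat (v + R0)). split; [lia|]. apply in_seq. unfold K. revert H1 H2; clear; lia. }
  pose proof (NoDup_incl_length ND INC) as Hl.
  unfold l, L, rng in Hl. rewrite length_map, length_seq, length_prod, length_map, length_seq in Hl.
  lia.
Qed.

Fixpoint sumto (g : nat -> R) (m : nat) : R :=
  match m with O => 0 | S m => sumto g m + Rabs (g m) end.

Lemma sumto_ge0 g m : 0 <= sumto g m.
Proof. induction m; simpl; [lra|]. pose proof (Rabs_pos (g m)); lra. Qed.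

Lemma sumto_bound g m r : (r < m)%nat -> Rabs (g r) <= sumto g m.
Proof.
  induction m; intro h; [lia|]. simpl.
  destruct (Nat.eq_dec r m) as [->|ne].
  - pose proof (sumto_ge0 g m); lra.
  - pose proof (Rabs_pos (g m)). assert (r < m)%nat by lia. specialize (IHm H0). lra.
Qed.

Theorem mainTheorem4 (a b : Z) (x1 : R) (hb : (0 < b)%Z) :
  let p1 := IZR a / IZR b in
  (exists M : R, forall i : nat, (1 <= i)%nat -> Rabs (xseq p1 x1 i) <= M) <->
  (exists k : nat, (1 <= k)%nat /\
     pseq p1 x1 (k + 1) = pseq p1 x1 1 /\ xseq p1 x1 (k + 1) = xseq p1 x1 1).
Proof.
  intro p1. unfold pseq, xseq. split.
  - intros [M HM].
    assert (HX : forall n, Rabs (snd (orb p1 x1 n)) <= M).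
    { intro n. specialize (HM (S n)). simpl in HM. rewrite Nat.sub_0_r in HM. apply HM. lia. }
    assert (M0 : 0 <= M) by (pose proof (HX O); pose proof (Rabs_pos (snd (orb p1 x1 0))); lra).
    assert (HP : forall n, Rabs (fst (orb p1 x1 n)) <= Rabs p1 + 2 * M).
    { intros [|n].
      - simpl. pose proof (Rabs_pos p1); lra.
      - pose proof (HX (S n)) as h1. pose proof (HX n) as h2.
        simpl in h1 |- *. destruct (orb p1 x1 n) as [p x]. simpl in *.
        replace (p - sgn x) with ((x + p - sgn x) - x) by ring.
        pose proof (Rabs_triang (x + p - sgn x) (- x)). rewrite Rabs_Ropp in H.
        pose proof (Rabs_pos p1). unfold Rminus at 1. lra. }
    assert (Hb : 0 < IZR b) by (apply IZR_lt; lia).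
    set (R0 := up (IZR b * (Rabs p1 + 2 * M + Rabs x1))).
    assert (HR0 : IZR b * (Rabs p1 + 2 * M + Rabs x1) < IZR R0) by
      (destruct (archimed (IZR b * (Rabs p1 + 2 * M + Rabs x1))); unfold R0; lra).
    destruct (pigeon (AB a b x1) R0) as [i [j [hij E]]].
    + intro n. pose proof (AB_rep a b x1 hb n) as Hr. fold p1 in Hr.
      pose proof (HP n) as h1. pose proof (HX n) as h2. rewrite Hr in h1, h2. simpl in h1, h2.
      split; apply le_IZR; rewrite abs_IZR.
      * replace (IZR (fst (AB a b x1 n))) with (IZR b * (IZR (fst (AB a b x1 n)) / IZR b)) by (field; lra).
        rewrite Rabs_mult, (Rabs_right (IZR b)) by lra.
        pose proof (Rabs_pos x1).
        assert (IZR b * Rabs (IZR (fst (AB a b x1 n)) / IZR b) <= IZR b * (Rabs p1 + 2 * M)) by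
          (apply Rmult_le_compat_l; lra). nra.
      * replace (IZR (snd (AB a b x1 n))) with (IZR b * ((x1 + IZR (snd (AB a b x1 n)) / IZR b) + - x1)) by (field; lra).
        rewrite Rabs_mult, (Rabs_right (IZR b)) by lra.
        pose proof (Rabs_triang (x1 + IZR (snd (AB a b x1 n)) / IZR b) (- x1)). rewrite Rabs_Ropp in H.
        pose proof (Rabs_pos p1).
        assert (IZR b * Rabs (x1 + IZR (snd (AB a b x1 n)) / IZR b + - x1) <= IZR b * (M + Rabs x1)) by
          (apply Rmult_le_compat_l; lra). nra.
    + exists (j - i)%nat. split; [lia|].
      assert (Hij : orb p1 x1 (i + (j - i)) = orb p1 x1 i).
      { replace (i + (j - i))%nat with j by lia.
        unfold p1. rewrite !(AB_rep a b x1 hb), E. reflexivity. }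
      apply orb_shift in Hij. replace (j - i + 1 - 1)%nat with (j - i)%nat by lia.
      simpl. rewrite Hij. auto.
  - intros [k [hk [E1 E2]]].
    replace (k + 1 - 1)%nat with k in E1, E2 by lia. simpl in E1, E2.
    assert (Ek : orb p1 x1 k = orb p1 x1 0).
    { simpl. destruct (orb p1 x1 k). simpl in *. subst. reflexivity. }
    assert (Eq : forall q r, orb p1 x1 (r + q * k) = orb p1 x1 r).
    { induction q; intro r; [f_equal; lia|].
      replace (r + S q * k)%nat with (r + q * k + k)%nat by lia.
      assert (G : forall n, orb p1 x1 (n + k) = orb p1 x1 n).
      { induction n; [exact Ek|]. simpl. rewrite IHn. reflexivity. }
      rewrite G. apply IHq. }
    exists (sumto (fun r => snd (orb p1 x1 r)) k). intros i hi.
    rewrite (Nat.div_mod_eq (i - 1) k), Nat.mul_comm, Nat.add_comm, Eq.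
    apply (sumto_bound (fun r => snd (orb p1 x1 r))). apply Nat.mod_upper_bound. lia.
Qed.
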